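(* Let $t$ be a normal term, $y$ a $\lambda$-variable, $\sigma=[(a_i:=^*y)_{1\le i\le n}]$ for distinct $\mu$-variables $a_1,\dots,a_n$, and let $\tau$ be the normal form of $t\sigma$. Then $t\sigma\triangleright^*_y\tau$.
   Context: $\lambda\mu$-terms: $t::= x\mid \lambda x.t\mid (t\;t)\mid \mu a.t\mid (a\;t)$ over disjoint infinite sets of $\lambda$-variables and $\mu$-variables. Reduction $(\lambda x.u\;v)\triangleright_\beta u[x:=v]$, $(\mu a.u\;v)\triangleright_\mu\mu a.u[a:=^*v]$, where $u[a:=^*v]$ replaces inductively each subterm $(a\;w)$ of $u$ by $(a\;(w\;v))$; a term is normal if it contains no redex. $t[(a_i:=^*y)_{1\le i\le n}]$ replaces inductively each subterm $(a_i\;w)$ by $(a_i\;(w\;y))$. For a $\lambda$-variable $y$, $u\triangleright_{\beta y}v$ (resp. $u\triangleright_{\mu y}v$) means $v$ is obtained from $u$ by contracting one redex of the form $(\lambda z.w\;y)$ (resp. $(\mu b.w\;y)$), i.e. a redex whose argument is the variable $y$; $\triangleright_y$ is the union of $\triangleright_{\beta y}$ and $\triangleright_{\mu y}$, and $\triangleright^*_y$ its reflexive transitive closure. *)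

(* Defs.v *)
(* lambda-mu-terms in de Bruijn style with two separate
   index namespaces: lambda-variables (Var) and mu-variables (Name). *)
From Stdlib Require Import Arith List Relations.
Import ListNotations.

Inductive term : Type :=
| Var  : nat -> term
| Lam  : term -> term
| App  : term -> term -> term
| Mu   : term -> term
| Name : nat -> term -> term.   (* (a t) *)

Fixpoint lift_l (c : nat) (t : term) : term :=
  match t with
  | Var x => Var (if c <=? x then S x else x)
  | Lam u => Lam (lift_l (S c) u)
  | App u v => App (lift_l c u) (lift_l c v)
  | Mu u => Mu (lift_l c u)
  | Name a u => Name a (lift_l c u)
  end.

Fixpoint lift_m (c : nat) (t : term) : term :=
  match t with
  | Var x => Var x
  | Lam u => Lam (lift_m c u)
  | App u v => App (lift_m c u) (lift_m c v)
  | Mu u => Mu (lift_m (S c) u)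
  | Name a u => Name (if c <=? a then S a else a) (lift_m c u)
  end.

(* u[x := v] where x is lambda-index k (the binder being removed) *)
Fixpoint subst_l (k : nat) (v : term) (t : term) : term :=
  match t with
  | Var x => if x =? k then v else if k <? x then Var (pred x) else Var x
  | Lam u => Lam (subst_l (S k) (lift_l 0 v) u)
  | App u w => App (subst_l k v u) (subst_l k v w)
  | Mu u => Mu (subst_l k (lift_m 0 v) u)
  | Name a u => Name a (subst_l k v u)
  end.

(* u[a :=* v] where a is mu-index k: each (a w) becomes (a (w v)) *)
Fixpoint subst_m (k : nat) (v : term) (t : term) : term :=
  match t with
  | Var x => Var x
  | Lam u => Lam (subst_m k (lift_l 0 v) u)
  | App u w => App (subst_m k v u) (subst_m k v w)
  | Mu u => Mu (subst_m (S k) (lift_m 0 v) u)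
  | Name a u =>
      if a =? k then Name a (App (subst_m k v u) v) else Name a (subst_m k v u)
  end.

(* t[(a_i :=* y)_{i}] with A = [a_1; ...; a_n] (free mu-variables)
   and y a free lambda-variable *)
Fixpoint msubst_y (A : list nat) (y : nat) (t : term) : term :=
  match t with
  | Var x => Var x
  | Lam u => Lam (msubst_y A (S y) u)
  | App u w => App (msubst_y A y u) (msubst_y A y w)
  | Mu u => Mu (msubst_y (map S A) y u)
  | Name a u =>
      if existsb (Nat.eqb a) A then Name a (App (msubst_y A y u) (Var y))
      else Name a (msubst_y A y u)
  end.

Inductive red1 : term -> term -> Prop :=
| r_beta : forall u v, red1 (App (Lam u) v) (subst_l 0 v u)
| r_mu : forall u v, red1 (App (Mu u) v) (Mu (subst_m 0 (lift_m 0 v) u))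
| r_lam : forall u u', red1 u u' -> red1 (Lam u) (Lam u')
| r_appl : forall u u' v, red1 u u' -> red1 (App u v) (App u' v)
| r_appr : forall u v v', red1 v v' -> red1 (App u v) (App u v')
| r_mub : forall u u', red1 u u' -> red1 (Mu u) (Mu u')
| r_name : forall a u u', red1 u u' -> red1 (Name a u) (Name a u').

(* red1_y y : contract one redex whose argument is the free lambda-variable y
   (its de Bruijn index is incremented when going under a lambda binder) *)
Inductive red1_y : nat -> term -> term -> Prop :=
| ry_beta : forall y u, red1_y y (App (Lam u) (Var y)) (subst_l 0 (Var y) u)
| ry_mu : forall y u, red1_y y (App (Mu u) (Var y)) (Mu (subst_m 0 (Var y) u))
| ry_lam : forall y u u', red1_y (S y) u u' -> red1_y y (Lam u) (Lam u')
| ry_appl : forall y u u' v, red1_y y u u' -> red1_y y (App u v) (App u' v)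
| ry_appr : forall y u v v', red1_y y v v' -> red1_y y (App u v) (App u v')
| ry_mub : forall y u u', red1_y y u u' -> red1_y y (Mu u) (Mu u')
| ry_name : forall y a u u', red1_y y u u' -> red1_y y (Name a u) (Name a u').

Definition red (t u : term) : Prop := clos_refl_trans term red1 t u.
Definition red_y (y : nat) (t u : term) : Prop := clos_refl_trans term (red1_y y) t u.

Fixpoint normal (t : term) : Prop :=
  match t with
  | Var _ => True
  | Lam u => normal u
  | Mu u => normal u
  | Name _ u => normal u
  | App u v =>
      match u with
      | Lam _ => False
      | Mu _ => False
      | _ => normal u /\ normal v
      end
  end.

(* Main.v *)
Require Import Defs.
From Stdlib Require Import List Arith Lia Relations.

Fixpoint stable (t : term) : Prop :=
  match t with
  | Var _ => True
  | Name _ _ => True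
  | App u _ => stable u
  | _ => False
  end.

Fixpoint ok (y : nat) (t : term) : Prop :=
  match t with
  | Var _ => True
  | Lam u => ok (S y) u
  | Mu u => ok y u
  | Name _ u => ok y u
  | App u v => ok y u /\ ok y v /\ (v = Var y \/ stable u)
  end.

Lemma normal_stable : forall u, normal u ->
  (match u with Lam _ | Mu _ => False | _ => True end) -> stable u.
Proof.
  induction u; simpl; intros; auto.
  destruct u1; simpl in *; try tauto; apply IHu1; tauto.
Qed.

Lemma msubst_stable : forall u A y, stable u -> stable (msubst_y A y u).
Proof.
  induction u; simpl; intros; auto; try tauto.
  destruct (existsb (Nat.eqb n) A); simpl; auto.
Qed.

Lemma ok_msubst : forall t A y, normal t -> ok y (msubst_y A y t).
Proof.
  induction t; simpl; intros; auto.
  - assert (Hs : stable t1).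
    { apply normal_stable; destruct t1; simpl in *; tauto. }
    assert (normal t1 /\ normal t2) by (destruct t1; tauto).
    repeat split; try (apply IHt1 || apply IHt2); try tauto.
    right; apply msubst_stable; auto.
  - destruct (existsb (Nat.eqb n) A); simpl; auto.
Qed.

Lemma stable_red1 : forall u u', red1 u u' -> stable u -> stable u'.
Proof.
  induction 1; simpl; intros; auto; try contradiction.
Qed.

Lemma stable_subst_l : forall u k j, stable u -> stable (subst_l k (Var j) u).
Proof.
  induction u; simpl; intros; auto.
  destruct (n =? k); simpl; auto. destruct (k <? n); simpl; auto.
Qed.

Lemma stable_subst_m : forall u k v, stable u -> stable (subst_m k v u).
Proof.
  induction u; simpl; intros; auto.
  destruct (n =? k); simpl; auto.
Qed.

Lemma ok_subst_l : forall u k j, k <= j -> ok (S j) u -> ok j (subst_l k (Var j) u).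
Proof.
  induction u; simpl; intros; auto.
  - destruct (n =? k); simpl; auto. destruct (k <? n); simpl; auto.
  - apply IHu; [lia|auto].
  - destruct H0 as [H1 [H2 [H3|H3]]]; repeat split; auto.
    + left; subst; cbn [subst_l].
      destruct (Nat.eqb_spec (S j) k); [lia|].
      destruct (Nat.ltb_spec k (S j)); [reflexivity|lia].
    + right; apply stable_subst_l; auto.
Qed.

Lemma ok_subst_m : forall u k y, ok y u -> ok y (subst_m k (Var y) u).
Proof.
  induction u; simpl; intros; auto.
  - destruct H as [H1 [H2 [H3|H3]]]; repeat split; auto.
    + left; subst; reflexivity.
    + right; apply stable_subst_m; auto.
  - destruct (n =? k); simpl; auto.
Qed.

Lemma red1_ok : forall t t', red1 t t' -> forall y, ok y t -> red1_y y t t' /\ ok y t'.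
Proof.
  induction 1; simpl; intros y0 Hok.
  - destruct Hok as [H1 [H2 [H3|H3]]]; [|contradiction]. subst.
    split; [constructor|]. apply ok_subst_l; auto; lia.
  - destruct Hok as [H1 [H2 [H3|H3]]]; [|contradiction]. subst. simpl.
    split; [constructor|]. apply ok_subst_m; auto.
  - destruct (IHred1 _ Hok); split; [constructor|]; auto.
  - destruct Hok as [H1 [H2 H3]]. destruct (IHred1 _ H1).
    split; [constructor; auto|]. repeat split; auto.
    destruct H3; [left; auto | right; eapply stable_red1; eauto].
  - destruct Hok as [H1 [H2 H3]]. destruct (IHred1 _ H2).
    split; [constructor; auto|]. repeat split; auto.
    destruct H3; [subst; inversion H | right; auto].
  - destruct (IHred1 _ Hok); split; [constructor|]; auto.
  - destruct (IHred1 _ Hok); split; [constructor|]; auto.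
Qed.

Lemma red_ok : forall t u, red t u -> forall y, ok y t -> red_y y t u /\ ok y u.
Proof.
  unfold red, red_y. induction 1; intros w Hok.
  - destruct (red1_ok _ _ H _ Hok). split; auto. apply rt_step; auto.
  - split; auto. apply rt_refl.
  - destruct (IHclos_refl_trans1 _ Hok). destruct (IHclos_refl_trans2 _ H2).
    split; auto. eapply rt_trans; eauto.
Qed.

Theorem mainTheorem18 :
  forall (t : term) (y : nat) (A : list nat) (tau : term),
    normal t -> NoDup A ->
    normal tau -> red (msubst_y A y t) tau ->
    red_y y (msubst_y A y t) tau.
Proof.
  intros t y A tau Hn _ _ Hr.
  apply (red_ok _ _ Hr). apply ok_msubst; auto.
Qed.
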